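(* Consider the directed graph on a finite action space $X$ (with $|X|\ge2$) in which there is an edge $a\to b$ exactly when $a$ and $b$ differ in the action of a single player $i$, with resistance $R_{a\to b}=\max\{0,U_i(a)-U_i(b)\}$. Among all spanning trees rooted at any state of $X$, any tree of minimum total resistance contains an edge of resistance zero.
   Context: Finite game with players $\mathcal{D}$, finite action sets $X_i$, $X=\prod_iX_i$, and real utilities $U_i:X\to\mathbb{R}$. A spanning tree rooted at $c\in X$ is a set of edges of the graph such that every state other than $c$ has exactly one outgoing edge, $c$ has none, and from every state the edges lead to $c$. The total resistance of a tree is the sum of the resistances of its edges. *)

(* Defs.v *)
From HB Require Import structures.
From mathcomp Require Import all_boot all_order all_algebra.
Set Implicit Arguments. Unset Strict Implicit. Unset Printing Implicit Defensive.
Import Order.TTheory GRing.Theory Num.Theory.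
Local Open Scope ring_scope.

Definition profile (D : finType) (A : D -> finType) := {dffun forall i : D, A i}.

Definition unilateral (D : finType) (A : D -> finType) (a b : profile A) : bool :=
  [exists i, (a i != b i) && [forall j, (j != i) ==> (a j == b j)]].

(* The (unique, on edges) player whose action changes along a -> b. *)
Definition deviator (D : finType) (A : D -> finType) (a b : profile A) : option D :=
  [pick i | a i != b i].

Definition resistance (R : realDomainType) (D : finType) (A : D -> finType)
  (U : D -> profile A -> R) (a b : profile A) : R :=
  match deviator a b with
  | Some i => Num.max 0 (U i a - U i b)
  | None => 0
  end.

(* T is a spanning tree rooted at c (edges oriented towards the root). *)
Definition spanning_tree (D : finType) (A : D -> finType)
  (c : profile A) (T : {set profile A * profile A}) : Prop :=
  [/\ (forall e, e \in T -> unilateral e.1 e.2),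
      (forall x, x != c -> exists! y, (x, y) \in T),
      (forall y, (c, y) \notin T) &
      (forall x, connect [rel u v | (u, v) \in T] x c)].

Definition tree_resistance (R : realDomainType) (D : finType) (A : D -> finType)
  (U : D -> profile A -> R) (T : {set profile A * profile A}) : R :=
  \sum_(e in T) resistance U e.1 e.2.

(* Main.v *)
Require Import Defs.
From mathcomp Require Import all_boot all_order all_algebra.
Import Order.TTheory GRing.Theory Num.Theory.
Local Open Scope ring_scope.

Lemma m0 (R : realDomainType) (d : R) : d <= 0 -> Num.max 0 d = 0.
Proof. move=> hd. apply/eqP; rewrite eq_le ge_max hd lexx /= le_max lexx. by []. Qed.

Lemma res_sym (R : realDomainType) (D : finType) (A : D -> finType)
  (U : D -> profile A -> R) a b :
  resistance U a b != 0 -> resistance U b a = 0.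
Proof.
rewrite /resistance /deviator.
rewrite (eq_pick (Q := fun i => a i != b i)); last by move=> i; rewrite eq_sym.
case: pickP => [i _|_] //.
case: (boolP (U i a - U i b <= 0)) => h.
  by rewrite m0 // eqxx.
move=> _; apply: m0; rewrite -opprB oppr_le0; rewrite -ltNge in h; exact: ltW.
Qed.

Lemma res_ge0 (R : realDomainType) (D : finType) (A : D -> finType)
  (U : D -> profile A -> R) a b : 0 <= resistance U a b.
Proof.
rewrite /resistance; case: (deviator a b) => [i|] //.
by rewrite le_max lexx.
Qed.

Theorem lemma9 (R : realDomainType) (D : finType) (A : D -> finType)
  (U : D -> profile A -> R) :
  (2 <= #|{: profile A}|)%N ->
  forall (c : profile A) (T : {set profile A * profile A}),
    spanning_tree c T ->
    (forall (c' : profile A) (T' : {set profile A * profile A}),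
        spanning_tree c' T' -> tree_resistance U T <= tree_resistance U T') ->
    exists2 e, e \in T & resistance U e.1 e.2 = 0.
Proof.
move=> h2 c T [Tuni Tsucc Troot Tconn] Tmin.
have [z zc] : exists z, z != c.
  case/card_gt1P: h2 => u [v [_ _ uv]].
  case: (eqVneq u c) => [uc|uc]; last by exists u.
  by exists v; rewrite -uc eq_sym.
have [x xcT] : exists x, (x, c) \in T.
  case/connectP: (Tconn z) => p pp pl.
  move: pp pl; case/lastP: p => [|p' y] /=; first by move=> _ zc'; rewrite zc' eqxx in zc.
  rewrite rcons_path last_rcons => /andP[_ e] yc.
  by exists (last z p'); rewrite yc.
have xc : x != c.
  by apply/eqP=> xc; move: (Troot c); rewrite -{1}xc xcT.
case: (eqVneq (resistance U x c) 0) => [r0|rn0]; first by exists (x, c).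
exfalso.
have r1 := @res_sym _ _ _ U _ _ rn0.
set T' := (c, x) |: (T :\ (x, c)).
have cxT : (c, x) \notin T := Troot x.
have inT' : forall e, e \in T' = (e == (c, x)) || ((e != (x, c)) && (e \in T)).
  by move=> e; rewrite in_setU1 in_setD1.
have st : spanning_tree x T'.
  split.
  - move=> [u v]; rewrite inT' => /orP[/eqP[-> ->]|/andP[_ /Tuni //]].
    move: (Tuni _ xcT) => /= /existsP[i /andP[ni /forallP H]].
    apply/existsP; exists i; rewrite eq_sym ni /=.
    by apply/forallP=> j; apply/implyP=> ji; rewrite eq_sym (implyP (H j) ji).
  - move=> u ux.
    case: (eqVneq u c) => [->|uc].
      exists x; split; first by rewrite inT' eqxx.
      move=> y; rewrite inT' => /orP[/eqP[->] //|/andP[_ cyT]].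
      by move: (Troot y); rewrite cyT.
    have [y [uyT uniq]] := Tsucc u uc.
    exists y; split.
      rewrite inT'; apply/orP; right; rewrite uyT andbT.
      by apply/eqP => -[ue _]; rewrite ue eqxx in ux.
    move=> y'; rewrite inT' => /orP[/eqP[ue _]|/andP[_ /uniq //]].
    by rewrite ue eqxx in uc.
  - move=> y; rewrite inT' negb_or; apply/andP; split.
      by apply/eqP => -[xc']; rewrite xc' eqxx in xc.
    rewrite negb_and negbK; apply/orP; case: (eqVneq y c) => [->|yc]; first by left.
    right; apply/negP => xyT.
    have [w [_ wu]] := Tsucc x xc.
    have e1 := wu _ xyT; have e2 := wu _ xcT.
    by move: yc; rewrite -e1 -e2 eqxx.
  - move=> u; case/connectP: (Tconn u) => p; elim: p u => [|v p IH] u /=.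
      move=> _ <-; apply: connect1 => /=; by rewrite inT' eqxx.
    move=> /andP[uvT pp] pl.
    case: (eqVneq u x) => [->|ux]; first exact: connect0.
    apply: connect_trans (IH v pp pl).
    apply: connect1 => /=; rewrite inT' uvT andbT; apply/orP; right.
    by apply/eqP => -[ue _]; rewrite ue eqxx in ux.
have := Tmin x T' st.
have cxT' : (c, x) \in T' by rewrite inT' eqxx.
rewrite /tree_resistance (bigD1 (x, c) xcT) (bigD1 (c, x) cxT') /=.
rewrite r1 add0r.
rewrite [X in _ <= X -> _](eq_bigl (fun e => (e \in T) && (e != (x, c)))); last first.
  move=> e /=; rewrite -[X in X && _ = _]/(e \in T') inT'; case: (eqVneq e (c, x)) => [->|ecx] /=.
    by rewrite (negbTE cxT).
  by rewrite andbT andbC.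
rewrite gerDr leNgt lt_def rn0 res_ge0.
by [].
Qed.
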